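(* Let $\mathbb{K}$ be an algebraically closed field of characteristic $0$ and $p\in\mathbb{K}[x,y]\setminus(\mathbb{K}[x]\cup\mathbb{K}[y])$ irreducible. Define $Q_0(x,y)=p(x,y)$ and $Q_{n+1}(x,y)=\mathrm{sfp}\big(\mathrm{res}_z(Q_n(x,z),Q_n(y,z))\big)$ for $n\ge0$. Let $n>0$ and $x_0,y_0\in\mathbb{K}$, where $x_0$ is not a root of $\mathrm{lc}_y(Q_k)$ for any $k<n$, and $\infty$ is not a coordinate of any element of the orbit of $x_0$. Then \[ Q_n(x_0,y_0)=0\iff y_0\in S^{2^{n-1}}(\{x_0\}), \] where $S=\pi_1\circ\pi_2^{-1}\circ\pi_2\circ\pi_1^{-1}$.
   Context: $C\subset\mathbb{P}^1(\mathbb{K})\times\mathbb{P}^1(\mathbb{K})$ is the curve defined by the bi-homogenization $x_0^{\deg_x p}y_0^{\deg_y p}p(x_1/x_0,y_1/y_0)$, and $\pi_1,\pi_2:C\to\mathbb{P}^1(\mathbb{K})$ are the projections to the first and second coordinate. For a set $A\subseteq\mathbb{P}^1(\mathbb{K})$, $S(A)=\pi_1(\pi_2^{-1}(\pi_2(\pi_1^{-1}(A))))=\{a'\,:\,\exists a\in A,\ \exists b\ \text{with } (a,b)\in C,\ (a',b)\in C\}$, and $S^m$ is its $m$-fold iterate. Orbits are the classes of the smallest equivalence relation on $C$ with $(a,b)\sim(c,d)$ whenever $a=c$ or $b=d$; the orbit of $x_0$ is the orbit of a point of $C$ with first coordinate $x_0$. $\mathrm{res}_z$ is the resultant with respect to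 $z$, $\mathrm{sfp}$ the square-free part, and $\mathrm{lc}_y(Q)\in\mathbb{K}[x]$ the leading coefficient of $Q$ as a polynomial in $y$. *)

(* Defs.v *)
From HB Require Import structures.
From mathcomp Require Import all_boot all_order all_algebra.

From Stdlib Require Import Relations.Relation_Operators.
Set Implicit Arguments. Unset Strict Implicit. Unset Printing Implicit Defensive.
Import Order.TTheory GRing.Theory Num.Theory.
Local Open Scope ring_scope.

(* Bivariate polynomials in K[x,y] are represented as {poly {poly K}}:
   the OUTER variable is y, the coefficients (inner polys) are in x.
   So p = \sum_j ((nth 0%R p j))(x) y^j and p(x0,y0) = p.[y0%:P].[x0]. *)

Section Defs.
Variable K : fieldType.

Definition rdvd (R : comNzRingType) (a b : R) : Prop := exists c, b = c * a.

Definition irreducible_XY (p : {poly {poly K}}) : Prop :=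
  p != 0 /\ p \isn't a GRing.unit /\
  forall a b : {poly {poly K}}, p = a * b -> a \is a GRing.unit \/ b \is a GRing.unit.

Definition notin_Kx (p : {poly {poly K}}) : Prop := (1 < size p)%N.
Definition notin_Ky (p : {poly {poly K}}) : Prop := exists j, (1 < size (nth 0%R p j))%N.

Definition is_sfp (q f : {poly {poly K}}) : Prop :=
  (f = 0 -> q = 0) /\
  (f != 0 ->
     [/\ rdvd q f, exists k, rdvd f (q ^+ k) &
         forall d : {poly {poly K}}, rdvd (d * d) q -> d \is a GRing.unit]).

(* res_z(Q(x,z), Q(y,z)) : Q is read as a polynomial in z with coefficients in K[x];
   Q(x,z) and Q(y,z) are polynomials in z with coefficients in K[x,y]. *)
Definition res_step (Q : {poly {poly K}}) : {poly {poly K}} :=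
  resultant (map_poly polyC Q) (map_poly (map_poly polyC) Q).

Definition degy (p : {poly {poly K}}) : nat := (size p).-1.
Definition degx (p : {poly {poly K}}) : nat := (\max_(j < size p) (size (nth 0%R p j)).-1)%N.

(* the bi-homogenization  x0^dx y0^dy p(x1/x0, y1/y0)  evaluated at (u0,u1),(v0,v1) *)
Definition bihom_eval (p : {poly {poly K}}) (u0 u1 v0 v1 : K) : K :=
  \sum_(j < size p) \sum_(i < (degx p).+1)
     ((nth 0%R p j))`_i * u1 ^+ i * u0 ^+ (degx p - i) * v1 ^+ j * v0 ^+ (degy p - j).

(* P^1(K) = option K : Some t = [1:t], None = infinity = [0:1] *)
Definition P1rep (a : option K) : K * K :=
  match a with Some t => (1, t) | None => (0, 1) end.

Definition onC (p : {poly {poly K}}) (a b : option K) : Prop :=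
  bihom_eval p (P1rep a).1 (P1rep a).2 (P1rep b).1 (P1rep b).2 = 0.

Definition Smap (p : {poly {poly K}}) (A : option K -> Prop) : option K -> Prop :=
  fun a' => exists a b, A a /\ onC p a b /\ onC p a' b.

Definition orbit_step (p : {poly {poly K}}) (u v : option K * option K) : Prop :=
  onC p u.1 u.2 /\ onC p v.1 v.2 /\ (u.1 = v.1 \/ u.2 = v.2).

Definition same_orbit (p : {poly {poly K}}) : option K * option K -> option K * option K -> Prop :=
  clos_refl_trans _ (orbit_step p).

Definition orbit_finite (p : {poly {poly K}}) (x0 : K) : Prop :=
  forall (b0 : option K) (w : option K * option K),
    onC p (Some x0) b0 -> same_orbit p (Some x0, b0) w ->
    w.1 <> None /\ w.2 <> None.

End Defs.

(* Main.v *)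
Require Import Defs.
From HB Require Import structures.
From mathcomp Require Import all_boot all_order all_algebra.
From mathcomp Require Import perm zify ring.
From Stdlib Require Import Relations.Relation_Operators.
Import Order.TTheory GRing.Theory Num.Theory.
Set Implicit Arguments. Unset Strict Implicit. Unset Printing Implicit Defensive.
Local Open Scope ring_scope.
Definition FS (R : nzRingType) (n m : nat) (U V : {poly R}) : 'M[R]_(n + m) :=
  col_mx (lin1_mx (poly_rV \o U \o* rVpoly)) (lin1_mx (poly_rV \o V \o* rVpoly)).

Lemma resultantFS (R : nzRingType) (p q : {poly R}) :
  resultant p q = \det (FS (size q).-1 (size p).-1 p q).
Proof. by []. Qed.

Lemma FSE (R : nzRingType) n m (U V : {poly R}) (i j : 'I_(n + m)) :
  FS n m U V i j = match split i with inl k => U`_(j - k) *+ (k <= j)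
                                    | inr k => V`_(j - k) *+ (k <= j) end.
Proof.
rewrite /FS mxE; case: {i}(split i) => i /[!mxE]/=;
  by rewrite rVpoly_delta coefXnM ltnNge if_neg -mulrb.
Qed.

Lemma map_FS (R S : nzRingType) (f : {rmorphism R -> S}) n m (U V : {poly R}) :
  map_mx f (FS n m U V) = FS n m (map_poly f U) (map_poly f V).
Proof.
apply/matrixP => i j; rewrite [LHS]mxE !FSE.
by case: (split i) => k; rewrite rmorphMn coef_map.
Qed.

Lemma FS_mul (R : comNzRingType) n m (U V : {poly R}) (u : 'rV_n) (w : 'rV_m) :
  row_mx u w *m FS n m U V = poly_rV (rVpoly u * U + rVpoly w * V).
Proof.
by rewrite /FS mul_row_col !mul_rV_lin1 /= linearD.
Qed.

Lemma key_root (K : closedFieldType) m (U V P W : {poly K}) :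
  size U = m.+1 -> (size W <= m)%N -> P * U + W * V = 0 -> (P != 0) || (W != 0) ->
  exists z, root U z && root V z.
Proof.
move=> sU sW e nz.
have U0 : U != 0 by rewrite -size_poly_eq0 sU.
have W0 : W != 0.
  apply/negP => /eqP W0; move: e nz; rewrite W0 mul0r addr0 eqxx orbF.
  by move/eqP; rewrite mulf_eq0 (negPf U0) orbF => ->.
have [cop|ncop] := boolP (coprimep U V).
  have : U %| W * V.
    have -> : W * V = - (P * U) by apply/eqP; rewrite -addr_eq0 addrC e.
    by rewrite dvdpNr dvdp_mull.
  rewrite Gauss_dvdpl // => /(dvdp_leq W0); rewrite sU => h.
  by move: (leq_trans h sW); rewrite ltnn.
have : size (gcdp U V) != 1%N by [].
case/closed_rootP => z; rewrite root_gcd => h; by exists z.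
Qed.

Lemma size_rVpoly (R : nzSemiRingType) d (v : 'rV[R]_d) : (size (rVpoly v) <= d)%N.
Proof. exact: size_poly. Qed.

Lemma FF (K : closedFieldType) n m (U V : {poly K}) :
  (size U <= m.+1)%N -> (size V <= n.+1)%N -> size U = m.+1 \/ size V = n.+1 ->
  (\det (FS n m U V) = 0 <-> exists z, root U z && root V z).
Proof.
move=> sU sV full; split.
  move/eqP/det0P => [v v0 hv].
  move: hv v0; rewrite -[v]hsubmxK FS_mul.
  have sP := size_rVpoly (lsubmx v); have sW := size_rVpoly (rsubmx v).
  set P := rVpoly _ in sP *; set W := rVpoly _ in sW * => hv v0.
  have e : P * U + W * V = 0.
    have := congr1 rVpoly hv; rewrite linear0 poly_rV_K // .
    rewrite (leq_trans (size_polyD _ _)) // geq_max.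
    apply/andP; split; rewrite (leq_trans (size_polyMleq _ _)) //.
      by move: (size P) (size U) sP sU => a b; lia.
    by move: (size W) (size V) sW sV => a b; lia.
  have nz : (P != 0) || (W != 0).
    apply: contraNT v0; rewrite negb_or !negbK => /andP[/eqP P0 /eqP W0].
    by rewrite -(rVpolyK (lsubmx v)) -(rVpolyK (rsubmx v)) -/P -/W P0 W0 !linear0 row_mx0.
  case: full => full.
    exact: key_root full sW e nz.
  have e' : W * V + P * U = 0 by rewrite addrC.
  have nz' : (W != 0) || (P != 0) by rewrite orbC.
  have [z /andP[z1 z2]] := key_root full sP e' nz'.
  by exists z; rewrite z1 z2.
case=> z /andP[/factor_theorem [U1 eU] /factor_theorem [V1 eV]].
apply/eqP/det0P.
have sU1 : (size U1 <= m)%N.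
  have [->|U10] := eqVneq U1 0; first by rewrite size_poly0.
  by move: sU; rewrite eU size_mul ?polyXsubC_eq0 // size_XsubC addn2.
have sV1 : (size V1 <= n)%N.
  have [->|V10] := eqVneq V1 0; first by rewrite size_poly0.
  by move: sV; rewrite eV size_mul ?polyXsubC_eq0 // size_XsubC addn2.
exists (row_mx (poly_rV V1) (poly_rV (- U1))).
  apply/negP => /eqP h.
  have : row_mx (poly_rV V1) (poly_rV (- U1)) = row_mx (0 : 'rV[K]_n) (0 : 'rV[K]_m) by rewrite h row_mx0.
  case/eq_row_mx => h1 h2.
  have V10 : V1 = 0 by rewrite -(poly_rV_K sV1) h1 linear0.
  have U10 : U1 = 0.
    apply/eqP; rewrite -oppr_eq0; apply/eqP.
    by rewrite -(poly_rV_K (p := - U1) (d := m)) ?size_polyN // h2 linear0.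
  case: full; [move: U10; rewrite eU | move: V10; rewrite eV] => -> ; rewrite mul0r size_poly0 //.
rewrite FS_mul !poly_rV_K ?size_polyN // eU eV.
have -> : V1 * (U1 * ('X - z%:P)) + - U1 * (V1 * ('X - z%:P)) = 0 by ring.
by rewrite linear0.
Qed.
Lemma coefM_bound (R : comNzRingType) (p q : {poly R}) a b :
  (size p <= a.+1)%N -> (size q <= b.+1)%N -> (p * q)`_(a + b) = p`_a * q`_b.
Proof.
move=> sp sq; have ha : (a < (a + b).+1)%N by rewrite ltnS leq_addr.
rewrite coefM (bigD1 (Ordinal ha)) //= addKn big1 ?addr0 // => [[j hj]] /= /negbTE hja.
have [lt|gt] := ltnP j a.
  rewrite [q`_ _](leq_sizeP _ _ sq) ?mulr0 //; move: lt; lia.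
rewrite [p`_ _](leq_sizeP _ _ sp) ?mul0r //.
move: gt hja; rewrite -val_eqE /=; lia.
Qed.

Lemma prod_bound (R : comNzRingType) (I : Type) (r : seq I) (f : I -> {poly R}) (e : I -> nat) :
  (forall i, (size (f i) <= (e i).+1)%N) ->
  (size (\prod_(i <- r) f i)%R <= (\sum_(i <- r) e i).+1)%N /\
  (\prod_(i <- r) f i)`_(\sum_(i <- r) e i)%N = \prod_(i <- r) (f i)`_(e i).
Proof.
move=> hf; elim: r => [|x r [IH1 IH2]].
  by rewrite !big_nil size_poly1 coef1.
rewrite !big_cons; split.
  rewrite (leq_trans (size_polyMleq _ _)) //.
  by move: (hf x) IH1; move: (size (f x)) (size (\prod_(j <- r) f j)) => u v; lia.
by rewrite coefM_bound // IH2.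
Qed.

Lemma det_bound (R : comNzRingType) n (M : 'M[{poly R}]_n) (e : 'I_n -> nat) :
  (forall i j, (size (M i j) <= (e i).+1)%N) ->
  (size (\det M) <= (\sum_i e i).+1)%N /\
  (\det M)`_(\sum_i e i)%N = \det (\matrix_(i, j) (M i j)`_(e i)).
Proof.
move=> hM; split.
  rewrite /determinant; apply: (big_ind (fun p : {poly R} => size p <= (\sum_i e i).+1)%N).
  - by rewrite size_poly0.
  - by move=> x y hx hy; rewrite (leq_trans (size_polyD _ _)) // geq_max hx hy.
  move=> s _; rewrite mulr_sign; have [] := prod_bound (index_enum _) (fun i => hM i (s i)).
  by case: (odd_perm s) => // h _; rewrite size_polyN.
rewrite /determinant coef_sum; apply: eq_bigr => s _.
rewrite !mulr_sign; have [_ h] := prod_bound (index_enum _) (fun i => hM i (s i)).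
have -> : \prod_i (\matrix_(i0, j) (M i0 j)`_(e i0)) i (s i) = \prod_i (M i (s i))`_(e i).
  by apply: eq_bigr => i _; rewrite mxE.
by case: (odd_perm s); rewrite ?coefN h.
Qed.

Definition Qa (K : fieldType) (Q : {poly {poly K}}) (a : K) : {poly K} :=
  map_poly (horner_eval a) Q.

Lemma ev2E (K : fieldType) (Q : {poly {poly K}}) a b : Q.[b%:P].[a] = (Qa Q a).[b].
Proof.
have := horner_map (horner_eval a) Q b%:P.
by rewrite /= !horner_evalE hornerC => ->.
Qed.

Lemma size_Qa (K : fieldType) (Q : {poly {poly K}}) a : (size (Qa Q a) <= size Q)%N.
Proof. exact: size_poly. Qed.

Lemma size_Qa_full (K : fieldType) (Q : {poly {poly K}}) a :
  (lead_coef Q).[a] != 0 -> size (Qa Q a) = size Q.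
Proof. by move=> h; rewrite /Qa size_map_poly_id0 // horner_evalE. Qed.

Lemma res_stepE (K : fieldType) (Q : {poly {poly K}}) :
  res_step Q = \det (FS (size Q).-1 (size Q).-1 (map_poly polyC Q) (map_poly (map_poly polyC) Q)).
Proof.
rewrite /res_step resultantFS size_map_polyC size_map_inj_poly //.
  by apply: map_inj_poly; [exact: polyC_inj | by []].
by rewrite map_poly0.
Qed.

Lemma res_eval (K : fieldType) (Q : {poly {poly K}}) a b :
  (res_step Q).[b%:P].[a] = \det (FS (size Q).-1 (size Q).-1 (Qa Q a) (Qa Q b)).
Proof.
rewrite res_stepE -[(\det _).[b%:P]]horner_evalE -det_map_mx map_FS -horner_evalE -det_map_mx map_FS.
congr (\det (FS _ _ _ _)); apply/polyP => i; rewrite !coef_map /= !horner_evalE.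
  by rewrite hornerC.
by rewrite (horner_map polyC) hornerC.
Qed.

Lemma resF (K : closedFieldType) (Q : {poly {poly K}}) a b :
  (1 < size Q)%N -> (lead_coef Q).[a] != 0 \/ (lead_coef Q).[b] != 0 ->
  ((res_step Q).[b%:P].[a] = 0 <-> exists z, Q.[z%:P].[a] = 0 /\ Q.[z%:P].[b] = 0).
Proof.
move=> sQ full; rewrite res_eval.
have sQ' : (size Q).-1.+1 = size Q by rewrite prednK // ltnW.
rewrite FF ?sQ' ?size_Qa //; last first.
  by case: full => h; [left|right]; rewrite size_Qa_full.
split => -[z hz]; exists z.
  by case/andP: hz => /eqP h1 /eqP h2; rewrite !ev2E.
by case: hz => h1 h2; rewrite /root -!ev2E h1 h2 eqxx.
Qed.

Lemma coef_nz_size (R : nzRingType) (p : {poly R}) i : p`_i != 0 -> (i < size p)%N.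
Proof. by apply: contraR; rewrite -leqNgt => /leq_sizeP ->. Qed.

Lemma LCgen (K : closedFieldType) d (X Y : {poly {poly {poly K}}}) (eX eY : nat) (a : K)
  (U V : {poly K}) :
  (forall i, (size (X`_i)%R <= eX.+1)%N) -> (forall i, (size (Y`_i)%R <= eY.+1)%N) ->
  (forall i, U`_i = (X`_i`_eX).[a]) -> (forall i, V`_i = (Y`_i`_eY).[a]) ->
  (size U <= d.+1)%N -> (size V <= d.+1)%N -> (size U = d.+1 \/ size V = d.+1) ->
  (forall z, ~~ (root U z && root V z)) ->
  (lead_coef (\det (FS d d X Y))).[a] != 0.
Proof.
move=> sX sY eU eV sU sV full nr.
pose ei := fun i : 'I_(d + d) => match split i with inl _ => eX | inr _ => eY end.
have hM : forall i j, (size (FS d d X Y i j) <= (ei i).+1)%N.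
  move=> i j; rewrite FSE /ei; case: (split i) => k; case: (k <= j)%N;
  by rewrite ?mulr1n ?mulr0n ?size_poly0.
have [h1 h2] := det_bound hM.
have key : ((\det (FS d d X Y))`_(\sum_i ei i)).[a] = \det (FS d d U V).
  rewrite h2 -horner_evalE -det_map_mx; congr (\det _); apply/matrixP => i j.
  rewrite [LHS]mxE [in LHS]mxE !FSE /ei; case: (split i) => k; case: (k <= j)%N.
  all: rewrite ?mulr1n ?mulr0n ?coef0 ?rmorph0 ?horner_evalE ?eU ?eV //.
have nz : \det (FS d d U V) != 0.
  apply/eqP => /(FF sU sV full) [z hz]; by move: (nr z); rewrite hz.
have cnz : (\det (FS d d X Y))`_(\sum_i ei i) != 0.
  by apply: contraNneq nz => h; rewrite -key h horner0.
have es : size (\det (FS d d X Y)) = (\sum_i ei i).+1.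
  by apply/eqP; rewrite eqn_leq h1 coef_nz_size.
by rewrite lead_coefE es /= key.
Qed.

Lemma coefC_lc_swap (K : fieldType) (Q : {poly {poly K}}) i :
  (lead_coef (swapXY Q))`_i = Q`_i`_((sizeY Q).-1).
Proof. by rewrite lead_coefE coef_swapXY sizeYE. Qed.

Lemma size_lc_swap (K : fieldType) (Q : {poly {poly K}}) :
  (size (lead_coef (swapXY Q)) <= size Q)%N.
Proof.
by apply/leq_sizeP => j hj; rewrite coefC_lc_swap (leq_sizeP _ _ (leqnn _) j hj) coef0.
Qed.

Lemma LC12 (K : closedFieldType) (Q : {poly {poly K}}) a :
  (1 < size Q)%N -> (lead_coef Q).[a] != 0 ->
  (forall z, Q.[z%:P].[a] = 0 -> (lead_coef (swapXY Q)).[z] != 0) ->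
  (lead_coef (res_step Q)).[a] != 0 /\ (lead_coef (swapXY (res_step Q))).[a] != 0.
Proof.
move=> sQ la hz.
have sQ' : (size Q).-1.+1 = size Q by rewrite prednK // ltnW.
have sX : forall i, (size ((map_poly polyC Q)`_i)%R <= 0%N.+1)%N.
  by move=> i; rewrite coef_map size_polyC_leq1.
have sY : forall i, (size ((map_poly (map_poly polyC) Q)`_i)%R <= (sizeY Q).-1.+1)%N.
  by move=> i; rewrite coef_map /= size_map_polyC (leq_trans (max_size_coefXY _ _)) // leqSpred.
have eA : forall i, (Qa Q a)`_i = (((map_poly polyC Q)`_i)`_0).[a].
  by move=> i; rewrite !coef_map /= coefC.
have eC : forall i, (lead_coef (swapXY Q))`_i = (((map_poly (map_poly polyC) Q)`_i)`_((sizeY Q).-1)).[a].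
  by move=> i; rewrite coefC_lc_swap !coef_map /= hornerC.
have sA : (size (Qa Q a) <= (size Q).-1.+1)%N by rewrite sQ' size_Qa.
have sC : (size (lead_coef (swapXY Q)) <= (size Q).-1.+1)%N by rewrite sQ' size_lc_swap.
have fA : size (Qa Q a) = (size Q).-1.+1 by rewrite sQ' size_Qa_full.
have nr : forall z, ~~ (root (Qa Q a) z && root (lead_coef (swapXY Q)) z).
  move=> z; apply/negP => /andP[/eqP h1 /eqP h2].
  by move: (hz z); rewrite ev2E h1 h2 eqxx => /(_ erefl).
split.
  rewrite res_stepE; apply: (LCgen sX sY eA eC sA sC (or_introl fA) nr).
have nr' : forall z, ~~ (root (lead_coef (swapXY Q)) z && root (Qa Q a) z).
  by move=> z; rewrite andbC.
have -> : swapXY (res_step Q) = \det (FS (size Q).-1 (size Q).-1 (map_poly (map_poly polyC) Q) (map_poly polyC Q)).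
  rewrite res_stepE -det_map_mx map_FS; congr (\det (FS _ _ _ _)).
    by rewrite -map_poly_comp; apply: eq_map_poly => q /=; rewrite swapXY_polyC.
  by rewrite -map_poly_comp; apply: eq_map_poly => q /=; rewrite swapXY_map_polyC.
exact: (LCgen sY sX eC eA sC sA (or_intror fA) nr').
Qed.

Lemma sfp_zero (K : fieldType) (q f : {poly {poly K}}) a b :
  is_sfp q f -> (q.[b%:P].[a] = 0 <-> f.[b%:P].[a] = 0).
Proof.
case=> h0 h1; have [f0|fn0] := eqVneq f 0; first by rewrite f0 h0 // !horner0.
have [[c ->] [k [c' ek]] _] := h1 fn0.
rewrite !hornerM; split; first by move=> ->; rewrite !mulr0.
move=> h; have := congr1 (fun r => r.[b%:P].[a]) ek.
rewrite /= !hornerM h mulr0 !horner_exp => /eqP.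
by rewrite expf_eq0 => /andP[_ /eqP].
Qed.

Lemma sfp_lc (K : fieldType) (q f : {poly {poly K}}) a :
  is_sfp q f -> (lead_coef f).[a] != 0 -> (lead_coef q).[a] != 0.
Proof.
case=> h0 h1 hf; have [f0|fn0] := eqVneq f 0.
  by move: hf; rewrite f0 lead_coef0 horner0 eqxx.
have [[c ef] _ _] := h1 fn0.
by move: hf; rewrite ef lead_coefM hornerM; apply: contraNneq => ->; rewrite mulr0.
Qed.

Lemma sfp_lcs (K : fieldType) (q f : {poly {poly K}}) a :
  is_sfp q f -> (lead_coef (swapXY f)).[a] != 0 -> (lead_coef (swapXY q)).[a] != 0.
Proof.
case=> h0 h1 hf; have [f0|fn0] := eqVneq f 0.
  by move: hf; rewrite f0 rmorph0 lead_coef0 horner0 eqxx.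
have [[c ef] _ _] := h1 fn0.
by move: hf; rewrite ef rmorphM lead_coefM hornerM; apply: contraNneq => ->; rewrite mulr0.
Qed.

Lemma max_pred n (F : 'I_n -> nat) : (\max_(i < n) (F i).-1)%N = (\max_(i < n) F i)%N.-1.
Proof.
elim: n F => [|n IH] F; first by rewrite !big_ord0.
rewrite !big_ord_recr /= IH.
by move: (\max_(i < n) F (widen_ord (leqnSn n) i))%N (F ord_max) => x y; lia.
Qed.

Lemma degxE (K : fieldType) (p : {poly {poly K}}) : degx p = (sizeY p).-1.
Proof. by rewrite /degx /sizeY max_pred. Qed.

Lemma size_coef_degx (K : fieldType) (p : {poly {poly K}}) j : (size (p`_j)%R <= (degx p).+1)%N.
Proof.
by rewrite degxE (leq_trans (max_size_coefXY _ _)) // leqSpred.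
Qed.

Lemma G1 (K : fieldType) (p : {poly {poly K}}) a b : bihom_eval p 1 a 1 b = p.[b%:P].[a].
Proof.
rewrite /bihom_eval ev2E (horner_coef_wide _ (size_Qa p a)).
apply: eq_bigr => j _; rewrite coef_map /= horner_evalE (horner_coef_wide _ (size_coef_degx p j)).
rewrite mulr_suml; apply: eq_bigr => i _; by rewrite !expr1n !mulr1.
Qed.

Lemma G2 (K : fieldType) (p : {poly {poly K}}) a : (0 < size p)%N ->
  bihom_eval p 1 a 0 1 = (lead_coef p).[a].
Proof.
move=> sp; have hj : ((size p).-1 < size p)%N by rewrite prednK.
rewrite /bihom_eval (bigD1 (Ordinal hj)) //= [X in _ + X]big1 ?addr0 => [|j /negbTE hj'].
  rewrite lead_coefE (horner_coef_wide _ (size_coef_degx p _)).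
  by apply: eq_bigr => i _; rewrite /degy subnn !expr0 !expr1n !mulr1.
rewrite big1 // => i _; rewrite expr0n.
have -> : (degy p - j == 0)%N = false.
  move: hj'; rewrite -val_eqE /= /degy => hh.
  have hlt : (j < (size p).-1)%N by rewrite ltn_neqAle hh /= -ltnS prednK.
  by rewrite subn_eq0 leqNgt hlt.
by rewrite mulr0.
Qed.

Lemma G3 (K : fieldType) (p : {poly {poly K}}) b :
  bihom_eval p 0 1 1 b = (lead_coef (swapXY p)).[b].
Proof.
rewrite /bihom_eval (horner_coef_wide _ (size_lc_swap p)).
apply: eq_bigr => j _; rewrite big_ord_recr /= big1 ?add0r => [|i _].
  by rewrite coefC_lc_swap -degxE subnn !expr0 !expr1n !mulr1.
rewrite expr0n.
have -> : (degx p - i == 0)%N = false.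
  by rewrite /= subn_eq0 leqNgt ltn_ord.
by rewrite mulr0 !mul0r.
Qed.

Lemma onC_SS (K : fieldType) (p : {poly {poly K}}) a b :
  onC p (Some a) (Some b) <-> p.[b%:P].[a] = 0.
Proof. by rewrite /onC /= G1. Qed.

Lemma onC_SN (K : fieldType) (p : {poly {poly K}}) a : (0 < size p)%N ->
  onC p (Some a) None <-> (lead_coef p).[a] = 0.
Proof. by move=> sp; rewrite /onC /= G2. Qed.

Lemma onC_NS (K : fieldType) (p : {poly {poly K}}) b :
  onC p None (Some b) <-> (lead_coef (swapXY p)).[b] = 0.
Proof. by rewrite /onC /= G3. Qed.


Lemma O1 (K : fieldType) (p : {poly {poly K}}) a :
  (0 < size p)%N -> orbit_finite p a -> (lead_coef p).[a] != 0.
Proof.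
move=> sp ha; apply/negP => /eqP h.
have hC : onC p (Some a) None by apply/onC_SN.
by have [_ /=] := ha None (Some a, None) hC (rt_refl _ _ _).
Qed.

Lemma O2 (K : fieldType) (p : {poly {poly K}}) a b :
  orbit_finite p a -> p.[b%:P].[a] = 0 -> (lead_coef (swapXY p)).[b] != 0.
Proof.
move=> ha hab; apply/negP => /eqP h.
have hC : onC p None (Some b) by apply/onC_NS.
have hab' : onC p (Some a) (Some b) by apply/onC_SS.
have st : orbit_step p (Some a, Some b) (None, Some b) by split => //; split => //; right.
by have [/= ] := ha (Some b) (None, Some b) hab' (rt_step _ _ _ _ st).
Qed.

Lemma O3 (K : fieldType) (p : {poly {poly K}}) a b a' :
  orbit_finite p a -> onC p (Some a) (Some b) -> onC p (Some a') (Some b) ->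
  orbit_finite p a'.
Proof.
move=> ha hab hab' b0 w h0 hw; apply: (ha (Some b) w hab).
have st1 : orbit_step p (Some a, Some b) (Some a', Some b) by split => //; split => //; right.
have st2 : orbit_step p (Some a', Some b) (Some a', b0) by split => //; split => //; left.
apply: rt_trans (rt_step _ _ _ _ st1) _.
exact: rt_trans (rt_step _ _ _ _ st2) hw.
Qed.

Lemma O4 (K : fieldType) (p : {poly {poly K}}) a s :
  orbit_finite p a -> onC p (Some a) s -> s <> None.
Proof. by move=> ha h; have [_ /=] := ha s (Some a, s) h (rt_refl _ _ _). Qed.

Lemma O5 (K : fieldType) (p : {poly {poly K}}) a b s :
  orbit_finite p a -> onC p (Some a) (Some b) -> onC p s (Some b) -> s <> None.
Proof.
move=> ha hab hs.
have st : orbit_step p (Some a, Some b) (s, Some b) by split => //; split => //; right.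
by have [/= ] := ha (Some b) (s, Some b) hab (rt_step _ _ _ _ st).
Qed.

Lemma S1 (K : fieldType) (p : {poly {poly K}}) m A s :
  iter m (Smap p) A s <-> exists t, A t /\ iter m (Smap p) (fun x => x = t) s.
Proof.
elim: m s => [|m IH] s /=.
  by split => [h|[t [h ->]]]; [exists s|].
split.
  case=> a [b [ha [h1 h2]]]; have [t [At ht]] := (IH a).1 ha.
  by exists t; split => //; exists a, b.
case=> t [At [a [b [ha [h1 h2]]]]]; exists a, b; split => //.
by apply/(IH a); exists t.
Qed.

Lemma S2 (K : fieldType) (p : {poly {poly K}}) m a s :
  orbit_finite p a -> iter m (Smap p) (fun x => x = Some a) s ->
  exists c, s = Some c /\ orbit_finite p c.
Proof.
move=> ga; elim: m s => [|m IH] s /=; first by move=> ->; exists a.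
case=> a0 [b [ha0 [h1 h2]]]; have [c [ec gc]] := IH _ ha0; subst a0.
case: b h1 h2 => [b|] h1 h2; last by have := O4 gc h1.
case: s h2 => [s|] h2; last by have := O5 gc h1 h2.
by exists s; split => //; exact: O3 gc h1 h2.
Qed.

Lemma S3 (K : closedFieldType) (p : {poly {poly K}}) m a :
  (1 < size p)%N -> orbit_finite p a -> iter m (Smap p) (fun x => x = Some a) (Some a).
Proof.
move=> sp ga.
have [b hb] : exists b, onC p (Some a) (Some b).
  have : size (Qa p a) != 1%N by rewrite size_Qa_full ?O1 ?(ltnW sp) // neq_ltn sp orbT.
  by case/closed_rootP => b /eqP hb; exists b; apply/onC_SS; rewrite ev2E.
elim: m => [|m IH] //=.
by exists (Some a), (Some b).
Qed.

Lemma S4 (K : fieldType) (p : {poly {poly K}}) a b :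
  orbit_finite p a ->
  (Smap p (fun x => x = Some a) (Some b) <-> exists z, p.[z%:P].[a] = 0 /\ p.[z%:P].[b] = 0).
Proof.
move=> ga; split.
  case=> a0 [b0 [-> [h1 h2]]].
  case: b0 h1 h2 => [z|] h1 h2; last by have := O4 ga h1.
  by exists z; split; apply/onC_SS.
by case=> z [h1 h2]; exists (Some a), (Some z); split => //; split; apply/onC_SS.
Qed.

Definition Zk (K : fieldType) (p : {poly {poly K}}) (k : nat) (a b : K) : Prop :=
  match k with
  | 0 => onC p (Some a) (Some b)
  | k'.+1 => iter (2 ^ k') (Smap p) (fun x => x = Some a) (Some b)
  end.

Definition Dk (K : fieldType) (p : {poly {poly K}}) (Q : nat -> {poly {poly K}}) (k : nat) :=
  forall a, orbit_finite p a ->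
  [/\ (lead_coef (Q k)).[a] != 0, (1 < size (Q k))%N,
      (forall b, (Q k).[b%:P].[a] = 0 <-> Zk p k a b) &
      (0 < k)%N -> (lead_coef (swapXY (Q k))).[a] != 0].

Lemma D0 (K : fieldType) (p : {poly {poly K}}) (Q : nat -> {poly {poly K}}) :
  Q 0%N = p -> (1 < size p)%N -> Dk p Q 0.
Proof.
move=> hQ0 sp a ga; rewrite hQ0; split => //.
  exact: O1 (ltnW sp) ga.
by move=> b; rewrite /Zk; split => /onC_SS.
Qed.

Lemma Dsym (K : closedFieldType) (Q : nat -> {poly {poly K}}) k z b :
  (forall k, is_sfp (Q k.+1) (res_step (Q k))) ->
  (1 < size (Q k))%N -> (lead_coef (Q k)).[z] != 0 ->
  ((Q k.+1).[z%:P].[b] = 0 <-> (Q k.+1).[b%:P].[z] = 0).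
Proof.
move=> hQS sQ lz.
apply: iff_trans (sfp_zero b z (hQS k)) _.
apply: iff_trans (resF sQ (or_intror lz)) _.
apply: iff_trans _ (iff_sym (sfp_zero z b (hQS k))).
apply: iff_trans _ (iff_sym (resF sQ (or_introl lz))).
by split => -[w [h1 h2]]; exists w.
Qed.

Lemma Zk_good (K : fieldType) (p : {poly {poly K}}) k a b :
  (0 < k)%N -> orbit_finite p a -> Zk p k a b -> orbit_finite p b.
Proof.
case: k => // k _ ga /= h; have [c [[->] gc]] := S2 ga h; exact: gc.
Qed.

Lemma Dstep (K : closedFieldType) (p : {poly {poly K}}) (Q : nat -> {poly {poly K}}) k :
  Q 0%N = p -> (forall k, is_sfp (Q k.+1) (res_step (Q k))) -> (1 < size p)%N ->
  (forall j, (j <= k)%N -> Dk p Q j) -> Dk p Q k.+1.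
Proof.
move=> hQ0 hQS sp IH a ga.
have [la sQ eqv lcs] := IH k (leqnn k) a ga.
have hQk : forall b, (Q k.+1).[b%:P].[a] = 0 <->
    exists z, (Q k).[z%:P].[a] = 0 /\ (Q k).[z%:P].[b] = 0.
  move=> b; apply: iff_trans (sfp_zero a b (hQS k)) _; exact: resF sQ (or_introl la).
have eqv' : forall b, (Q k.+1).[b%:P].[a] = 0 <-> Zk p k.+1 a b.
  move=> b; apply: iff_trans (hQk b) _.
  case: k IH la sQ eqv lcs hQk => [|k] IH la sQ eqv lcs hQk.
    by rewrite hQ0 /=; apply: iff_sym; exact: S4.
  have e2 : (2 ^ k.+1 = 2 ^ k + 2 ^ k)%N by rewrite expnS mul2n addnn.
  rewrite /Zk e2 iterD; split.
    case=> z [h1 h2]; apply/S1; exists (Some z); split; first exact: (eqv z).1 h1.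
    have gz := Zk_good (ltn0Sn k) ga ((eqv z).1 h1).
    have [lz sQz eqvz _] := IH k (leqnSn k) z gz.
    have [_ _ eqvz' _] := IH k.+1 (leqnn _) z gz.
    by apply/(eqvz' b); apply/(Dsym b hQS sQz lz).
  move/S1 => [t [ht1 ht2]]; have [z [ez gz]] := S2 ga ht1; subst t.
  exists z; split; first exact: (eqv z).2 ht1.
  have [lz sQz _ _] := IH k (leqnSn k) z gz.
  have [_ _ eqvz' _] := IH k.+1 (leqnn _) z gz.
  by apply/(Dsym b hQS sQz lz); apply/(eqvz' b).
have H : forall z, (Q k).[z%:P].[a] = 0 -> (lead_coef (swapXY (Q k))).[z] != 0.
  case: k IH la sQ eqv lcs hQk eqv' => [|k] IH la sQ eqv lcs hQk eqv' z hz.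
    by rewrite hQ0; apply: O2 ga _; rewrite -hQ0.
  have gz := Zk_good (ltn0Sn k) ga ((eqv z).1 hz).
  by have [_ _ _ ->] := IH k.+1 (leqnn _) z gz.
have [l1 l2] := LC12 sQ la H.
have la' := sfp_lc (hQS k) l1.
split => //.
- have hr : root (Qa (Q k.+1) a) a by rewrite /root -ev2E; apply/eqP/(eqv' a); exact: S3.
  have Qa0 : Qa (Q k.+1) a != 0.
    by rewrite -size_poly_eq0 size_Qa_full // size_poly_eq0; apply: contraNneq la' => ->; rewrite lead_coef0 horner0.
  by have := root_size_gt1 Qa0 hr; rewrite size_Qa_full.
- by move=> _; exact: sfp_lcs (hQS k) l2.
Qed.

Lemma Dall (K : closedFieldType) (p : {poly {poly K}}) (Q : nat -> {poly {poly K}}) :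
  Q 0%N = p -> (forall k, is_sfp (Q k.+1) (res_step (Q k))) -> (1 < size p)%N ->
  forall k, Dk p Q k.
Proof.
move=> hQ0 hQS sp k.
suff : forall j, (j <= k)%N -> Dk p Q j by apply.
elim: k => [|k IH] j hj.
  by move: hj; rewrite leqn0 => /eqP ->; exact: D0.
rewrite leq_eqVlt in hj; case/orP: hj => [/eqP ->|hj]; last exact: IH.
exact: Dstep hQ0 hQS sp IH.
Qed.

Unset Implicit Arguments.
Theorem lemma3 (K : closedFieldType) (hK : [pchar K] =i pred0)
  (p : {poly {poly K}}) (hirr : irreducible_XY p)
  (hx : notin_Kx p) (hy : notin_Ky p)
  (Q : nat -> {poly {poly K}})
  (hQ0 : Q 0%N = p) (hQS : forall k : nat, is_sfp (Q k.+1) (res_step (Q k)))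
  (n : nat) (hn : (0 < n)%N) (x0 y0 : K)
  (hlc : forall k : nat, (k < n)%N -> ~~ root (lead_coef (Q k)) x0)
  (horb : orbit_finite p x0) :
  (Q n).[y0%:P].[x0] = 0 <->
  iter (2 ^ n.-1) (Smap p) (fun a => a = Some x0) (Some y0).
Proof.
have [_ _ e _] := Dall hQ0 hQS hx n horb.
case: n hn hlc e => // n _ _ e; exact: e y0.
Qed.
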